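(* Let $0\to(M,\alpha_M)\to(K,\alpha_K)\xrightarrow{\pi}(L,\alpha_L)\to0$ and $0\to(N,\alpha_N)\to(H,\alpha_H)\xrightarrow{\tau}(K,\alpha_K)\to0$ be central extensions of Hom-Leibniz $n$-algebras. (a) If $\pi\circ\tau:(H,\alpha_H)\to(L,\alpha_L)$ is a universal $\alpha$-central extension, then $\tau$ is a universal central extension. (b) If $\tau$ is a universal central extension, then $\pi\circ\tau$ is an $\alpha$-central extension which is universal over central extensions: for every central extension $\omega:(P,\alpha_P)\to(L,\alpha_L)$ there is a unique homomorphism $\Phi:(H,\alpha_H)\to(P,\alpha_P)$ with $\omega\circ\Phi=\pi\circ\tau$.
   Context: Fix a field $\mathbb K$ and $n\ge2$. A (multiplicative) Hom-Leibniz $n$-algebra is a $\mathbb K$-vector space $L$ with an $n$-linear bracket and a linear map $\alpha_L$ preserving the bracket, satisfying $[[x_1,\dots,x_n],\alpha_L(y_1),\dots,\alpha_L(y_{n-1})]=\sum_{i=1}^n[\alpha_L(x_1),\dots,[x_i,y_1,\dots,y_{n-1}],\dots,\alpha_L(x_n)]$. Homomorphisms preserve brackets and commute with twisting maps. Center $Z(K)$: elements $x$ with every bracket having $x$ in some position equal to $0$. An extension of $L$ is a surjective homomorphism $\pi:K\to L$ with kernel $M$; central if $M\subseteq Z(K)$; $\alpha$-central if every bracket with $n-1$ entries in $\alpha_K(M)$ and the remaining entry (any position) in $K$ vanishes. A central extension $\pi:K\to L$ is universal central (resp. universal $\alpha$-central) if for every central (resp. $\alpha$-central) extension $\pi':K'\to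 L$ there is a unique homomorphism $h:K\to K'$ with $\pi'\circ h=\pi$. *)

(* Defs.v *)
From HB Require Import structures.
From mathcomp Require Import all_boot all_order all_algebra.
Set Implicit Arguments. Unset Strict Implicit. Unset Printing Implicit Defensive.
Import GRing.Theory.
Local Open Scope ring_scope.

Definition upd (V : Type) (n : nat) (f : 'I_n -> V) (i : 'I_n) (x : V) : 'I_n -> V :=
  fun j => if j == i then x else f j.

Record HomLeibniz (F : fieldType) (n : nat) := {
  carrier :> lmodType F;
  bracket : ('I_n -> carrier) -> carrier;
  twist : carrier -> carrier;
  twist_linear : linear twist;
  bracket_multilinear : forall (f : 'I_n -> carrier) (i : 'I_n) (a : F) (x y : carrier),
      bracket (upd f i (a *: x + y)) = a *: bracket (upd f i x) + bracket (upd f i y);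
  twist_mult : forall f : 'I_n -> carrier, twist (bracket f) = bracket (fun j => twist (f j));
  (* Hom-Leibniz identity: the entry of y at position 0 is ignored; the
     y_1..y_{n-1} of the paper are the entries of y at positions 1..n-1. *)
  hom_leibniz : forall (i0 : 'I_n), nat_of_ord i0 = 0%N ->
      forall (x y : 'I_n -> carrier),
      bracket (upd (fun j => twist (y j)) i0 (bracket x)) =
      \sum_(i < n) bracket (upd (fun j => twist (x j)) i (bracket (upd y i0 (x i))))
}.

Arguments bracket {F n} h _.
Arguments twist {F n} h _.

Section Defs.
Variables (F : fieldType) (n : nat).

Definition is_hom (A B : HomLeibniz F n) (f : A -> B) : Prop :=
  linear f /\
  (forall x : 'I_n -> A, f (bracket A x) = bracket B (fun j => f (x j))) /\
  (forall x : A, f (twist A x) = twist B (f x)).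

Definition is_extension (A B : HomLeibniz F n) (f : A -> B) : Prop :=
  is_hom f /\ (forall b : B, exists a : A, f a = b).

Definition in_center (A : HomLeibniz F n) (x : A) : Prop :=
  forall (y : 'I_n -> A) (i : 'I_n), bracket A (upd y i x) = 0.

Definition central_extension (A B : HomLeibniz F n) (f : A -> B) : Prop :=
  is_extension f /\ (forall m : A, f m = 0 -> in_center m).

Definition alpha_central_extension (A B : HomLeibniz F n) (f : A -> B) : Prop :=
  is_extension f /\
  (forall (y : 'I_n -> A) (i : 'I_n),
     (forall j : 'I_n, j != i -> exists m : A, f m = 0 /\ y j = twist A m) ->
     bracket A y = 0).

Definition unique_lift (A B C : HomLeibniz F n) (f : A -> B) (g : C -> B) : Prop :=
  exists h : C -> A, is_hom h /\ (forall x, f (h x) = g x) /\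
    (forall h' : C -> A, is_hom h' -> (forall x, f (h' x) = g x) -> forall x, h' x = h x).

Definition universal_central_extension (A B : HomLeibniz F n) (f : A -> B) : Prop :=
  central_extension f /\
  forall (P : HomLeibniz F n) (w : P -> B), central_extension w -> unique_lift w f.

Definition universal_alpha_central_extension (A B : HomLeibniz F n) (f : A -> B) : Prop :=
  central_extension f /\
  forall (P : HomLeibniz F n) (w : P -> B), alpha_central_extension w -> unique_lift w f.

End Defs.

(* Main.v *)
From HB Require Import structures.
From mathcomp Require Import all_boot all_order all_algebra.
From Stdlib Require Import ClassicalDescription ClassicalEpsilon FunctionalExtensionality.
Require Import Defs.
Set Implicit Arguments. Unset Strict Implicit. Unset Printing Implicit Defensive.
Import GRing.Theory.

Definition pb (P : Prop) : bool := if excluded_middle_informative P then true else false.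
Lemma pbP (P : Prop) : reflect P (pb P).
Proof. rewrite /pb; case: excluded_middle_informative => h; by constructor. Qed.

Section LQuot.
Local Open Scope ring_scope. Local Open Scope quotient_scope.
Variables (F : fieldType) (V : lmodType F) (P : V -> Prop).
Hypotheses (P0 : P 0) (PD : forall x y, P x -> P y -> P (x + y))
  (PZ : forall a x, P x -> P (a *: x)).

Definition Sp : {pred V} := fun x => pb (P x).
Lemma Sp_zmod : zmod_closed Sp.
Proof.
split; first by apply/pbP.
move=> x y /pbP hx /pbP hy; apply/pbP; rewrite -scaleN1r; exact: PD hx (PZ _ hy).
Qed.
HB.instance Definition _ := GRing.isZmodClosed.Build V Sp Sp_zmod.

Definition Q := Quotient.quot Sp.
Definition proj : V -> Q := \pi_Q.
Lemma projD x y : proj (x + y) = proj x + proj y.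
Proof. by rewrite /proj !piE. Qed.
Lemma proj0' : proj 0 = 0.
Proof. by rewrite /proj pi_zeror. Qed.
Lemma projE x y : (x - y \in Sp) = (proj x == proj y).
Proof. by rewrite Quotient.idealrBE. Qed.
Lemma proj0 x : (proj x = 0) <-> P x.
Proof.
have := projE x 0; rewrite subr0 proj0' => e; split.
  by move=> h; have /pbP : x \in Sp by rewrite e h.
by move=> h; apply/eqP; rewrite -e; apply/pbP.

Qed.
Lemma projN x : proj (- x) = - proj x.
Proof. by rewrite /proj !piE. Qed.
Lemma projB x y : proj (x - y) = proj x - proj y.
Proof. by rewrite projD projN. Qed.
Lemma proj_surj (q : Q) : exists x, proj x = q.
Proof. by exists (repr q); rewrite /proj reprK. Qed.
Definition scq (a : F) (q : Q) : Q := proj (a *: repr q).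
Lemma scq_proj a x : scq a (proj x) = proj (a *: x).
Proof.
apply/eqP; rewrite /scq -projE -scalerBr.
have : proj (repr (proj x)) - proj x = 0 by rewrite /proj reprK subrr.
by rewrite -projB => /proj0 h; apply/pbP; apply: PZ.
Qed.
Lemma scqA a b v : scq a (scq b v) = scq (a * b) v.
Proof. by have [x <-] := proj_surj v; rewrite !scq_proj scalerA. Qed.
Lemma scq1 : left_id 1 scq.
Proof. by move=> v; have [x <-] := proj_surj v; rewrite !scq_proj scale1r. Qed.
Lemma scqDr : right_distributive scq +%R.
Proof.
move=> a u v; have [x <-] := proj_surj u; have [y <-] := proj_surj v.
by rewrite -projD !scq_proj scalerDr projD.
Qed.
Lemma scqDl v : {morph scq^~ v: a b / a + b}.
Proof. by move=> a b; have [x <-] := proj_surj v; rewrite !scq_proj scalerDl projD. Qed.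
HB.instance Definition _ := GRing.Zmodule.on Q.
HB.instance Definition _ := GRing.Zmodule_isLmodule.Build F Q scqA scq1 scqDr scqDl.
Lemma projZ a x : proj (a *: x) = a *: proj x.
Proof. by rewrite -scq_proj. Qed.
Lemma proj_linear : linear proj.
Proof. by move=> a x y; rewrite projD projZ. Qed.
Variable (al : V -> V) (hal : linear al) (Pal : forall x, P x -> P (al x)).
Definition beta (q : Q) : Q := proj (al (repr q)).
Lemma beta_proj x : beta (proj x) = proj (al x).
Proof.
apply/eqP; rewrite /beta -projE.
have e : al (repr (proj x)) - al x = al (repr (proj x) - x).
  by rewrite (zmod_morphism_linear hal).
rewrite e; apply/pbP; apply: Pal.
have : proj (repr (proj x)) - proj x = 0 by rewrite /proj reprK subrr.
by rewrite -projB => /proj0.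
Qed.
Lemma beta_linear : linear beta.
Proof.
move=> a u v; have [x <-] := proj_surj u; have [y <-] := proj_surj v.
by rewrite -projZ -projD !beta_proj hal projD projZ.
Qed.
End LQuot.

Section Lin.
Local Open Scope ring_scope.
Variables (F : fieldType) (U V : lmodType F) (f : U -> V) (hf : linear f).
Lemma linD x y : f (x + y) = f x + f y.
Proof. by have := hf 1 x y; rewrite !scale1r. Qed.
Lemma linB x y : f (x - y) = f x - f y.
Proof. exact: (zmod_morphism_linear hf). Qed.
Lemma lin0 : f 0 = 0.
Proof. move: (linB 0 0); rewrite subr0 subrr; apply. Qed.
Lemma linN x : f (- x) = - f x.
Proof. by rewrite -sub0r linB lin0 sub0r. Qed.
Lemma linZ a x : f (a *: x) = a *: f x.
Proof. by have := hf a x 0; rewrite !addr0 lin0 addr0. Qed.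
Lemma lin_sum (I : Type) (s : seq I) (g : I -> U) :
  f (\sum_(t <- s) g t) = \sum_(t <- s) f (g t).
Proof. elim: s => [|a s IH]; first by rewrite !big_nil lin0.
by rewrite !big_cons linD IH. Qed.
End Lin.

Section HL.
Local Open Scope ring_scope.
Variables (F : fieldType) (n : nat) (A : HomLeibniz F n).

Lemma upd_same (T : Type) (f : 'I_n -> T) i x : upd f i x i = x.
Proof. by rewrite /upd eqxx. Qed.
Lemma upd_other (T : Type) (f : 'I_n -> T) i j x : j != i -> upd f i x j = f j.
Proof. by rewrite /upd => /negbTE ->. Qed.
Lemma upd_id (T : Type) (f : 'I_n -> T) i : upd f i (f i) = f.
Proof. by apply: functional_extensionality => j; rewrite /upd; case: eqP => // ->. Qed.
Lemma upd_upd (T : Type) (f : 'I_n -> T) i x y : upd (upd f i x) i y = upd f i y.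
Proof. by apply: functional_extensionality => j; rewrite /upd; case: eqP. Qed.

Lemma bracketD f i x y :
  bracket A (upd f i (x + y)) = bracket A (upd f i x) + bracket A (upd f i y).
Proof. by have := bracket_multilinear f i 1 x y; rewrite !scale1r. Qed.
Lemma bracket0 f i : bracket A (upd f i 0) = 0.
Proof. have h := bracketD f i 0 0; rewrite addr0 in h.
by apply: (addrI (bracket A (upd f i 0))); rewrite addr0 -h. Qed.
Lemma bracketZ f i a x : bracket A (upd f i (a *: x)) = a *: bracket A (upd f i x).
Proof. by have := bracket_multilinear f i a x 0; rewrite !addr0 bracket0 addr0. Qed.
Lemma bracket_sum f i (I : Type) (s : seq I) (g : I -> A) :
  bracket A (upd f i (\sum_(t <- s) g t)) = \sum_(t <- s) bracket A (upd f i (g t)).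
Proof. elim: s => [|a s IH]; first by rewrite !big_nil bracket0.
by rewrite !big_cons bracketD IH. Qed.

Lemma center_upd (m : A) f i : in_center m -> bracket A (upd f i m) = 0.
Proof. by move=> h; apply: h. Qed.

Lemma bracket_central (f g : 'I_n -> A) :
  (forall j, in_center (f j - g j)) -> bracket A f = bracket A g.
Proof.
move=> hc.
suff H : forall k, (k <= n)%N ->
  bracket A (fun j : 'I_n => if (j < k)%N then g j else f j) = bracket A f.
  rewrite -(H n (leqnn n)); congr (bracket A _).
  by apply: functional_extensionality => j; rewrite ltn_ord.
elim => [|k IH] hk.
  by congr (bracket A _); apply: functional_extensionality => j; rewrite ltn0.
pose i := Ordinal hk.
set h := (fun j : 'I_n => if (j < k)%N then g j else f j).
have e1 : (fun j : 'I_n => if (j < k.+1)%N then g j else f j) = upd h i (g i).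
  apply: functional_extensionality => j; rewrite /upd /h -val_eqE /= ltnS leq_eqVlt.
  by case: eqP => [e|] //=; congr g; apply: val_inj.
have e2 : h = upd h i (f i).
  by rewrite -{1}(upd_id h i) /h /= ltnn.
by rewrite e1 -(IH (ltnW hk)) -/h {2}e2 -[f i](subrK (g i)) bracketD (center_upd _ _ (hc i)) add0r.
Qed.

Lemma exists_other (hn : (2 <= n)%N) (i : 'I_n) : exists j : 'I_n, j != i.
Proof.
have h0 : (0 < n)%N by apply: leq_trans hn.
have h1 : (1 < n)%N by [].
case: (eqVneq (nat_of_ord i) 0%N) => e.
  by exists (Ordinal h1); rewrite -val_eqE /= e.
by exists (Ordinal h0); rewrite -val_eqE /= eq_sym.
Qed.

Definition inspan (x : A) : Prop :=
  exists s : seq ('I_n -> A), x = \sum_(t <- s) bracket A t.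

End HL.

Section Span.
Local Open Scope ring_scope.
Variables (F : fieldType) (n : nat) (A : HomLeibniz F n).
Lemma inspan0 : inspan (0 : A).
Proof. by exists [::]; rewrite big_nil. Qed.
Lemma inspanD (x y : A) : inspan x -> inspan y -> inspan (x + y).
Proof. by move=> [s ->] [t ->]; exists (s ++ t); rewrite big_cat. Qed.
Lemma inspanB (f : 'I_n -> A) : inspan (bracket A f).
Proof. by exists [:: f]; rewrite big_seq1. Qed.
Lemma inspanZ (hn : (0 < n)%N) a (x : A) : inspan x -> inspan (a *: x).
Proof.
move=> [s ->]; pose i0 := Ordinal hn.
exists (map (fun t => upd t i0 (a *: t i0)) s); rewrite big_map scaler_sumr.
by apply: eq_bigr => t _; rewrite bracketZ upd_id.
Qed.
Lemma inspanT (x : A) : inspan x -> inspan (twist A x).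
Proof.
move=> [s ->]; exists (map (fun t j => twist A (t j)) s); rewrite big_map.
rewrite (lin_sum (@twist_linear _ _ A)); apply: eq_bigr => t _; exact: twist_mult.
Qed.
End Span.

Lemma pairE2 (U W : Type) (p q : U * W) : p.1 = q.1 -> p.2 = q.2 -> p = q.
Proof. by case: p => a b; case: q => c d /= -> ->. Qed.

Section Prod.
Local Open Scope ring_scope.
Variables (F : fieldType) (n : nat) (A : HomLeibniz F n) (V : lmodType F)
  (beta : V -> V) (hbeta : linear beta) (Phi : ('I_n -> A) -> V).
Hypotheses (Phi_ml : forall (f : 'I_n -> A) i a x y,
    Phi (upd f i (a *: x + y)) = a *: Phi (upd f i x) + Phi (upd f i y))
  (Phi_tw : forall f, beta (Phi f) = Phi (fun j => twist A (f j)))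
  (Phi_hl : forall i0 : 'I_n, nat_of_ord i0 = 0%N -> forall x y : 'I_n -> A,
      Phi (upd (fun j => twist A (y j)) i0 (bracket A x)) =
      \sum_(i < n) Phi (upd (fun j => twist A (x j)) i (bracket A (upd y i0 (x i))))).

Definition PB (f : 'I_n -> (A * V)%type) : (A * V)%type :=
  (bracket A (fun j => (f j).1), Phi (fun j => (f j).1)).
Definition PT (u : (A * V)%type) : (A * V)%type := (twist A u.1, beta u.2).

Lemma fst_upd (f : 'I_n -> (A * V)%type) i z :
  (fun j => (upd f i z j).1) = upd (fun j => (f j).1) i z.1.
Proof. by apply: functional_extensionality => j; rewrite /upd; case: (j == i). Qed.
Lemma fst_sum (I : Type) (r : seq I) (G : I -> (A * V)%type) :
  (\sum_(t <- r) G t).1 = \sum_(t <- r) (G t).1.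
Proof. by elim: r => [|a r IH]; rewrite ?big_nil // !big_cons /= -IH. Qed.
Lemma snd_sum (I : Type) (r : seq I) (G : I -> (A * V)%type) :
  (\sum_(t <- r) G t).2 = \sum_(t <- r) (G t).2.
Proof. by elim: r => [|a r IH]; rewrite ?big_nil // !big_cons /= -IH. Qed.

Lemma PT_linear : linear PT.
Proof. by move=> a u v; apply: pairE2; rewrite /= ?twist_linear ?hbeta. Qed.
Lemma PB_ml (f : 'I_n -> (A * V)%type) i a x y :
  PB (upd f i (a *: x + y)) = a *: PB (upd f i x) + PB (upd f i y).
Proof. by apply: pairE2; rewrite /PB /= !fst_upd /= ?bracket_multilinear ?Phi_ml. Qed.
Lemma PT_mult f : PT (PB f) = PB (fun j => PT (f j)).
Proof. by apply: pairE2; rewrite /= ?twist_mult ?Phi_tw. Qed.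
Lemma PB_hl : forall i0 : 'I_n, nat_of_ord i0 = 0%N -> forall x y : 'I_n -> (A * V)%type,
      PB (upd (fun j => PT (y j)) i0 (PB x)) =
      \sum_(i < n) PB (upd (fun j => PT (x j)) i (PB (upd y i0 (x i)))).
Proof.
move=> i0 h0 x y; apply: pairE2; rewrite ?fst_sum ?snd_sum /PB /= fst_upd /=.
  rewrite (hom_leibniz h0); apply: eq_bigr => i _; rewrite fst_upd /= fst_upd //.
rewrite (Phi_hl h0); apply: eq_bigr => i _; rewrite fst_upd /= fst_upd //.
Qed.

Definition ProdHL : HomLeibniz F n :=
  {| carrier := (A * V)%type; bracket := PB; twist := PT; twist_linear := PT_linear;
     bracket_multilinear := PB_ml; twist_mult := PT_mult; hom_leibniz := PB_hl |}.
End Prod.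

Section ProdFacts.
Local Open Scope ring_scope.
Variables (F : fieldType) (n : nat) (hn : (2 <= n)%N) (A : HomLeibniz F n) (V : lmodType F)
  (beta : V -> V) (hbeta : linear beta) (Phi : ('I_n -> A) -> V).
Hypotheses (Phi_ml : forall (f : 'I_n -> A) i a x y,
    Phi (upd f i (a *: x + y)) = a *: Phi (upd f i x) + Phi (upd f i y))
  (Phi_tw : forall f, beta (Phi f) = Phi (fun j => twist A (f j)))
  (Phi_hl : forall i0 : 'I_n, nat_of_ord i0 = 0%N -> forall x y : 'I_n -> A,
      Phi (upd (fun j => twist A (y j)) i0 (bracket A x)) =
      \sum_(i < n) Phi (upd (fun j => twist A (x j)) i (bracket A (upd y i0 (x i))))).
Let E := ProdHL hbeta Phi_ml Phi_tw Phi_hl.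

Lemma prod_hom_fst (B : HomLeibniz F n) (f : A -> B) :
  is_hom f -> is_hom (fun u : E => f u.1).
Proof.
move=> [hl [hb ht]]; split; [|split].
- by move=> a u v /=; rewrite hl.
- by move=> x /=; rewrite hb.
- by move=> x /=; rewrite ht.
Qed.

Lemma prod_ext (B : HomLeibniz F n) (f : A -> B) :
  is_extension f -> is_extension (fun u : E => f u.1).
Proof.
move=> [hh hs]; split; first exact: prod_hom_fst.
by move=> b; have [a <-] := hs b; exists ((a, 0) : E).
Qed.

Lemma prod_central (B : HomLeibniz F n) (f : A -> B) :
  central_extension f -> (forall y i (m : A), f m = 0 -> Phi (upd y i m) = 0) ->
  central_extension (fun u : E => f u.1).
Proof.
move=> [he hc] hP; split; first exact: prod_ext.
move=> m hm y i; apply: pairE2; rewrite /= /PB fst_upd.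
  exact: hc.
exact: hP.
Qed.

Lemma prod_alpha (B : HomLeibniz F n) (f : A -> B) :
  central_extension f ->
  (forall y i, (forall j, j != i -> exists m, f m = 0 /\ y j = twist A m) -> Phi y = 0) ->
  alpha_central_extension (fun u : E => f u.1).
Proof.
move=> [he hc] hP; split; first exact: prod_ext.
move=> y i hy; apply: pairE2; rewrite /= /PB.
  have [j hj] := exists_other hn i.
  have [m [hm e]] := hy j hj.
  rewrite -(upd_id (fun j0 => (y j0).1) j) e /=; apply: hc.
  have [hl [hb ht]] := he.1.
  by rewrite ht hm (lin0 (@twist_linear _ _ B)).
apply: hP => j hj; have [m [hm e]] := hy j hj.
by exists m.1; rewrite e.
Qed.

Lemma prod_pair_hom (C : HomLeibniz F n) (g1 : C -> A) (g2 : C -> V) :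
  is_hom g1 -> linear g2 -> (forall x, g2 (bracket C x) = Phi (fun j => g1 (x j))) ->
  (forall x, g2 (twist C x) = beta (g2 x)) -> is_hom (fun x => ((g1 x, g2 x) : E)).
Proof.
move=> [hl [hb ht]] h2l h2b h2t; split; [|split].
- by move=> a u v; apply: pairE2; rewrite /= ?hl ?h2l.
- by move=> x; apply: pairE2; rewrite /= ?hb ?h2b.
- by move=> x; apply: pairE2; rewrite /= ?ht ?h2t.
Qed.

Lemma hom_into_fst (C : HomLeibniz F n) (g : C -> E) :
  is_hom g -> is_hom (fun x => (g x).1).
Proof.
move=> [hl [hb ht]]; split; [|split].
- by move=> a u v; rewrite hl.
- by move=> x; rewrite hb.
- by move=> x; rewrite ht.
Qed.

Lemma hom_into_snd (C : HomLeibniz F n) (g : C -> E) :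
  is_hom g -> [/\ linear (fun x => (g x).2),
    (forall x, (g (bracket C x)).2 = Phi (fun j => (g (x j)).1)) &
    (forall x, (g (twist C x)).2 = beta (g x).2)].
Proof.
move=> [hl [hb ht]]; split.
- by move=> a u v; rewrite hl.
- by move=> x; rewrite hb.
- by move=> x; rewrite ht.
Qed.
End ProdFacts.

Section Main1.
Local Open Scope ring_scope.
Variables (F : fieldType) (n : nat) (hn : (2 <= n)%N).

Lemma hn0 : (0 < n)%N.
Proof. by apply: leq_trans hn. Qed.

Section Z.
Variables (A : HomLeibniz F n) (V : lmodType F) (beta : V -> V) (hbeta : linear beta).
Definition zPhi : ('I_n -> A) -> V := fun _ => 0.
Lemma Z_ml : forall (f : 'I_n -> A) i a x y,
    zPhi (upd f i (a *: x + y)) = a *: zPhi (upd f i x) + zPhi (upd f i y).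
Proof. by move=> *; rewrite /zPhi scaler0 addr0. Qed.
Lemma Z_tw : forall f, beta (zPhi f) = zPhi (fun j => twist A (f j)).
Proof. by move=> f; exact: lin0 hbeta. Qed.
Lemma Z_hl : forall i0 : 'I_n, nat_of_ord i0 = 0%N -> forall x y : 'I_n -> A,
      zPhi (upd (fun j => twist A (y j)) i0 (bracket A x)) =
      \sum_(i < n) zPhi (upd (fun j => twist A (x j)) i (bracket A (upd y i0 (x i)))).
Proof. by move=> *; rewrite big1. Qed.
Definition ProdZ := ProdHL hbeta Z_ml Z_tw Z_hl.
End Z.

Lemma hom_id (A : HomLeibniz F n) : is_hom (fun x : A => x).
Proof. by split; [|split]. Qed.

Lemma kill_zero (C B : HomLeibniz F n) (f : C -> B) (V : lmodType F)
  (beta : V -> V) (hbeta : linear beta) (phi : C -> V) :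
  linear phi -> (forall x, phi (bracket C x) = 0) ->
  (forall x, phi (twist C x) = beta (phi x)) ->
  unique_lift (fun u : ProdZ C hbeta => f u.1) f -> forall x, phi x = 0.
Proof.
move=> hl hB hT [h [hh [hf hu]]] x.
have h0 : is_hom (fun x => ((x, 0) : ProdZ C hbeta)).
  apply: prod_pair_hom; first exact: hom_id.
  - by move=> a u v; rewrite scaler0 addr0.
  - by [].
  - by move=> y; rewrite (lin0 hbeta).
have h1 : is_hom (fun x => ((x, phi x) : ProdZ C hbeta)).
  by apply: prod_pair_hom => //; exact: hom_id.
have e0 := hu _ h0 (fun _ => erefl) x.
have e1 := hu _ h1 (fun _ => erefl) x.
exact: (congr1 snd (etrans e1 (esym e0))).
Qed.

Lemma perfect (C B : HomLeibniz F n) (f : C -> B) :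
  (forall (V : lmodType F) (beta : V -> V) (hbeta : linear beta),
     unique_lift (fun u : ProdZ C hbeta => f u.1) f) -> forall x : C, inspan x.
Proof.
move=> hU x.
have P0 := @inspan0 F n C.
have PD := @inspanD F n C.
have PZ := @inspanZ F n C hn0.
have Pal := @inspanT F n C.
have hal := @twist_linear _ _ C.
have H := @kill_zero C B f _ _ (@beta_linear F C (@inspan F n C) P0 PD PZ (twist C) hal Pal)
  (proj P0 PD PZ) (proj_linear P0 PD PZ).
apply/(proj0 P0 PD PZ).
apply: H; last exact: hU.
- by move=> y; apply/proj0; exact: inspanB.
- by move=> y; rewrite beta_proj.
Qed.
End Main1.

Lemma choose_fun (T U : Type) (Q : T -> U -> Prop) :
  (forall t, exists u, Q t u) -> exists g : T -> U, forall t, Q t (g t).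
Proof.
move=> h; exists (fun t => proj1_sig (constructive_indefinite_description _ (h t))).
by move=> t; case: (constructive_indefinite_description _ (h t)).
Qed.

Lemma map_upd (n : nat) (T U : Type) (h : T -> U) (f : 'I_n -> T) i x :
  (fun j => h (upd f i x j)) = upd (fun j => h (f j)) i (h x).
Proof. by apply: functional_extensionality => j; rewrite /upd; case: (j == i). Qed.

Section Main2.
Local Open Scope ring_scope.
Variables (F : fieldType) (n : nat) (hn : (2 <= n)%N).

Lemma hom_lin (A B : HomLeibniz F n) (f : A -> B) : is_hom f -> linear f.
Proof. by case. Qed.
Lemma hom_br (A B : HomLeibniz F n) (f : A -> B) : is_hom f ->
  forall x, f (bracket A x) = bracket B (fun j => f (x j)).
Proof. by case=> _ []. Qed.
Lemma hom_tw (A B : HomLeibniz F n) (f : A -> B) : is_hom f ->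
  forall x, f (twist A x) = twist B (f x).
Proof. by case=> _ []. Qed.

Lemma sim (P K : HomLeibniz F n) (w : P -> K) : central_extension w ->
  forall u v, w u = w v -> in_center (u - v).
Proof.
move=> [[hw _] hc] u v e; apply: hc; by rewrite (linB (hom_lin hw)) e subrr.
Qed.

Lemma bracket_sim (P K : HomLeibniz F n) (w : P -> K) : central_extension w ->
  forall f f' : 'I_n -> P, (fun j => w (f j)) = (fun j => w (f' j)) ->
  bracket P f = bracket P f'.
Proof.
move=> hw f f' e; apply: bracket_central => j; apply: (sim hw).
exact: (equal_f e j).
Qed.

Lemma central_alpha (A B : HomLeibniz F n) (f : A -> B) :
  central_extension f -> alpha_central_extension f.
Proof.
move=> [he hc]; split=> // y i hy.
have [j hj] := exists_other hn i.
have [m [hm e]] := hy j hj.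
rewrite -(upd_id y j) e; apply: hc.
by rewrite (hom_tw he.1) hm (lin0 (@twist_linear _ _ B)).
Qed.

Lemma L1 (P K : HomLeibniz F n) (w : P -> K) : central_extension w ->
  forall (p : 'I_n -> P) i, (forall j, j != i -> in_center (w (p j))) ->
  forall z : 'I_n -> P, bracket P (upd (fun j => twist P (p j)) i (bracket P z)) = 0.
Proof.
move=> hw p i hp z.
pose i0 := Ordinal (hn0 hn).
have hL := @hom_leibniz _ _ P i0 erefl (upd p i (z i0)) z.
rewrite center_upd in hL; last first.
  apply: hw.2; rewrite (hom_br hw.1.1) map_upd.
  have [j hj] := exists_other hn i.
  set G := upd _ _ _; rewrite -(upd_id G j) {2}/G upd_other //.
  exact: center_upd (hp j hj).
rewrite (bigD1 i) //= big1 ?addr0 in hL; last first.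
  move=> k hk; apply: center_upd; apply: hw.2.
  rewrite (hom_br hw.1.1) upd_other // map_upd.
  exact: center_upd (hp k hk).
by rewrite upd_same upd_id map_upd upd_upd in hL.
Qed.

Lemma alpha_zero (P K : HomLeibniz F n) (w : P -> K) : central_extension w ->
  forall (y : 'I_n -> P) i (p : 'I_n -> P),
  (forall j, j != i -> in_center (w (p j)) /\ w (y j) = w (twist P (p j))) ->
  (exists q, inspan q /\ w (y i) = w q) -> bracket P y = 0.
Proof.
move=> hw y i p hp [q [[s ->] hq]].
rewrite (@bracket_sim _ _ w hw y (upd (fun j => twist P (p j)) i (\sum_(t <- s) bracket P t))).
  by rewrite bracket_sum big1 // => t _; apply: (L1 hw) => j hj; exact: (hp j hj).1.
apply: functional_extensionality => j; rewrite /upd; case: eqP => [->|/eqP ne] //.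
exact: (hp j ne).2.
Qed.
End Main2.

Section PhiS.
Local Open Scope ring_scope.
Variables (F : fieldType) (n : nat) (hn : (2 <= n)%N) (H B P : HomLeibniz F n)
  (g : H -> B) (hg : is_hom g) (om : P -> B) (hom : central_extension om)
  (s : B -> P) (hs : forall b, om (s b) = b).

Definition PhiS (a : 'I_n -> H) : P := bracket P (fun j => s (g (a j))).

Lemma comp2 (f : 'I_n -> H) i x :
  (fun j => s (g (upd f i x j))) = upd (fun j => s (g (f j))) i (s (g x)).
Proof. by apply: functional_extensionality => j; rewrite /upd; case: (j == i). Qed.

Lemma bracket_upd_sim (f : 'I_n -> P) i u v : om u = om v ->
  bracket P (upd f i u) = bracket P (upd f i v).
Proof. by move=> e; apply: (bracket_sim hom); rewrite !(map_upd om) e. Qed.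

Let oml := hom_lin hom.1.1.

Lemma PhiS_ml (f : 'I_n -> H) i a x y :
  PhiS (upd f i (a *: x + y)) = a *: PhiS (upd f i x) + PhiS (upd f i y).
Proof.
rewrite /PhiS !comp2 (@bracket_upd_sim _ _ _ (a *: s (g x) + s (g y))).
  by rewrite bracket_multilinear.
by rewrite oml !hs (hom_lin hg).
Qed.

Lemma PhiS_tw f : twist P (PhiS f) = PhiS (fun j => twist H (f j)).
Proof.
rewrite /PhiS twist_mult; apply: (bracket_sim hom).
apply: functional_extensionality => j.
by rewrite (hom_tw hom.1.1) !hs (hom_tw hg).
Qed.

Lemma PhiS_hl : forall i0 : 'I_n, nat_of_ord i0 = 0%N -> forall x y : 'I_n -> H,
      PhiS (upd (fun j => twist H (y j)) i0 (bracket H x)) =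
      \sum_(i < n) PhiS (upd (fun j => twist H (x j)) i (bracket H (upd y i0 (x i)))).
Proof.
move=> i0 h0 x y.
rewrite /PhiS comp2.
rewrite (@bracket_sim _ _ _ _ _ hom _
  (upd (fun j => twist P (s (g (y j)))) i0 (bracket P (fun j => s (g (x j)))))); last first.
  apply: functional_extensionality => j; rewrite /upd; case: (j == i0).
    rewrite hs (hom_br hg) (hom_br hom.1.1); congr (bracket B _).
    by apply: functional_extensionality => k; rewrite hs.
  by rewrite hs (hom_tw hg) (hom_tw hom.1.1) hs.
rewrite (hom_leibniz h0); apply: eq_bigr => i _.
rewrite comp2; apply: (bracket_sim hom).
apply: functional_extensionality => j; rewrite /upd; case: (j == i).
  rewrite hs (hom_br hg) (hom_br hom.1.1); congr (bracket B _).
  by apply: functional_extensionality => k; case: (k == i0); rewrite hs.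
by rewrite hs (hom_tw hg) (hom_tw hom.1.1) hs.
Qed.

Definition ES := ProdHL (@twist_linear _ _ P) PhiS_ml PhiS_tw PhiS_hl.

End PhiS.

Section PhiS2.
Local Open Scope ring_scope.
Variables (F : fieldType) (n : nat) (hn : (2 <= n)%N) (H B P : HomLeibniz F n)
  (g : H -> B) (hg : is_hom g) (om : P -> B) (hom : central_extension om)
  (s : B -> P) (hs : forall b, om (s b) = b).
Let E := ES hg hom hs.

Lemma from_E (hperf : forall x : H, inspan x) (h : H -> E) :
  is_hom h -> (forall x, (h x).1 = x) -> unique_lift om g.
Proof.
move=> hh h1.
have [hl2 hb2 ht2] := hom_into_snd hh.
pose h2 x := (h x).2.
have hl2' : linear h2 by exact: hl2.
have oml := hom_lin hom.1.1.
have hc : linear (fun x => om (h2 x)).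
  by move=> a u v; rewrite hl2' oml.
have e : forall x, om (h2 x) = g x.
  move=> x; have [t ->] := hperf x.
  rewrite (lin_sum hc) (lin_sum (hom_lin hg)); apply: eq_bigr => u _.
  rewrite /h2 hb2 /= /PhiS (hom_br hom.1.1) (hom_br hg); congr (bracket B _).
  by apply: functional_extensionality => j; rewrite h1 hs.
exists h2; split; [split; [|split] | split].
- exact: hl2'.
- move=> x; rewrite /h2 hb2 /= /PhiS; apply: (bracket_sim hom).
  by apply: functional_extensionality => j; rewrite h1 hs -/(h2 (x j)) e.
- by move=> x; rewrite /h2 ht2.
- exact: e.
move=> h' hh' e' x; have [t ->] := hperf x.
rewrite (lin_sum (hom_lin hh')) (lin_sum hl2'); apply: eq_bigr => u _.
rewrite (hom_br hh') /h2 hb2 /= /PhiS; apply: (bracket_sim hom).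
by apply: functional_extensionality => j; rewrite h1 hs e'.
Qed.

Lemma E_central (K0 : HomLeibniz F n) (f : H -> K0) :
  central_extension f -> (forall m, f m = 0 -> g m = 0) ->
  central_extension (fun u : E => f u.1).
Proof.
move=> hf hfg; apply: prod_central => // y i m hm.
transitivity (bracket P (upd (fun j => s (g (y j))) i (s (g m)))).
  by congr (bracket P _); apply: functional_extensionality => j; rewrite /upd; case: (j == i).
apply: center_upd; apply: hom.2; rewrite hs; exact: hfg.
Qed.

Lemma E_alpha (L0 : HomLeibniz F n) (f : H -> L0) :
  central_extension f -> (forall m, f m = 0 -> in_center (g m)) ->
  (forall x : H, inspan x) ->
  alpha_central_extension (fun u : E => f u.1).
Proof.
move=> hf hfg hperf; apply: prod_alpha => // y i hy.
have [m hm] : exists m : 'I_n -> H, forall j, j != i -> f (m j) = 0 /\ y j = twist H (m j).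
  apply: (@choose_fun _ _ (fun j mj => j != i -> f mj = 0 /\ y j = twist H mj)) => j.
  case: (eqVneq j i) => [->|ne]; first by exists 0.
  by have [mj hmj] := hy j ne; exists mj => /=.
rewrite /PhiS; apply: (@alpha_zero _ _ hn _ _ _ hom _ i (fun j => s (g (m j)))).
  move=> j ne; have [e1 e2] := hm j ne; split; first by rewrite hs; exact: hfg.
  by rewrite hs e2 (hom_tw hg) (hom_tw hom.1.1) hs.
have [t et] := hperf (y i).
exists (\sum_(u <- t) bracket P (fun k => s (g (u k)))); split.
  by exists (map (fun u k => s (g (u k))) t); rewrite big_map.
rewrite hs et (lin_sum (hom_lin hg)) (lin_sum (hom_lin hom.1.1)); apply: eq_bigr => u _.
rewrite (hom_br hg) (hom_br hom.1.1); congr (bracket B _).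
by apply: functional_extensionality => k; rewrite hs.
Qed.
End PhiS2.

Section Final.
Local Open Scope ring_scope.
Variables (F : fieldType) (n : nat) (hn : (2 <= n)%N).

Lemma hom_comp (A B C : HomLeibniz F n) (f : A -> B) (g : B -> C) :
  is_hom f -> is_hom g -> is_hom (fun x => g (f x)).
Proof.
move=> hf hg; split; [|split].
- by move=> a u v; rewrite (hom_lin hf) (hom_lin hg).
- by move=> x; rewrite (hom_br hf) (hom_br hg).
- by move=> x; rewrite (hom_tw hf) (hom_tw hg).
Qed.

Lemma ext_comp (A B C : HomLeibniz F n) (f : A -> B) (g : B -> C) :
  is_extension f -> is_extension g -> is_extension (fun x => g (f x)).
Proof.
move=> [hf sf] [hg sg]; split; first exact: hom_comp.
by move=> c; have [b <-] := sg c; have [a <-] := sf b; exists a.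
Qed.

Lemma section_of (A B : HomLeibniz F n) (f : A -> B) :
  is_extension f -> exists s : B -> A, forall b, f (s b) = b.
Proof. by move=> [_ hs]; exact: (@choose_fun _ _ (fun b a => f a = b) hs). Qed.

Lemma lift_id (A B : HomLeibniz F n) (f : A -> B) (h1 : A -> A) :
  unique_lift f f -> is_hom h1 -> (forall x, f (h1 x) = f x) -> forall x, h1 x = x.
Proof.
move=> [h0 [_ [_ hu]]] hh1 e x.
rewrite (hu h1 hh1 e x); symmetry; exact: (hu (fun y => y) (hom_id _) (fun _ => erefl) x).
Qed.

End Final.


Unset Implicit Arguments.
Theorem proposition5p8 (F : fieldType) (n : nat) (hn : (2 <= n)%N)
  (L K H : HomLeibniz F n) (pi : K -> L) (tau : H -> K) :
  central_extension pi -> central_extension tau ->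
  (universal_alpha_central_extension (fun x => pi (tau x)) ->
     universal_central_extension tau) /\
  (universal_central_extension tau ->
     alpha_central_extension (fun x => pi (tau x)) /\
     forall (P : HomLeibniz F n) (w : P -> L), central_extension w ->
       unique_lift w (fun x => pi (tau x))).
Proof.
move=> hpi htau.
have hpt := ext_comp htau.1 hpi.1.
split.
- move=> [hc hl]; split => // P w hw.
  have hperf : forall x : H, inspan x.
    apply: (@perfect _ _ hn _ _ (fun x => pi (tau x))) => V beta hbeta.
    apply: hl; apply: (prod_alpha hn hbeta (@Z_ml _ _ H _) (@Z_tw _ _ H _ _ hbeta) (@Z_hl _ _ H _) (f := fun x => pi (tau x))) => //.
  have hid := hl H _ (central_alpha hn hc).
  have [s hs] := section_of hw.1.
  have hfg : forall m, pi (tau m) = 0%R -> in_center (tau m).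
    by move=> m hm; exact: hpi.2.
  have [h [hh [he _]]] := hl _ _ (@E_alpha _ _ hn _ _ _ _ htau.1.1 _ hw _ hs _ (fun x => pi (tau x)) hc hfg hperf).
  apply: (from_E hperf hh) => x.
  exact: (lift_id hid (hom_into_fst hh) he).
- move=> [hc hl].
  have hperf : forall x : H, inspan x.
    apply: (@perfect _ _ hn _ _ tau) => V beta hbeta.
    by apply: hl; apply: (prod_central hbeta (@Z_ml _ _ H _) (@Z_tw _ _ H _ _ hbeta) (@Z_hl _ _ H _) (f := tau)).
  split.
    split=> // y i hy.
    have [m hm] : exists m : 'I_n -> H, forall j, j != i ->
        pi (tau (m j)) = 0%R /\ y j = twist H (m j).
      apply: (@choose_fun _ _ (fun j mj => j != i -> pi (tau mj) = 0%R /\ y j = twist H mj)) => j.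
      case: (eqVneq j i) => [->|ne]; first by exists 0%R.
      by have [mj hmj] := hy j ne; exists mj => /=.
    apply: (@alpha_zero _ _ hn _ _ _ htau _ i m).
      move=> j ne; have [e1 e2] := hm j ne; split; first exact: hpi.2.
      by rewrite e2.
    by exists (y i).
  move=> P w hw.
  have hid := hl H _ hc.
  have [s hs] := section_of hw.1.
  have hfg : forall m, tau m = 0%R -> pi (tau m) = 0%R.
    by move=> m ->; rewrite (lin0 (hom_lin hpi.1.1)).
  have [h [hh [he _]]] := hl _ _ (@E_central _ _ _ _ _ _ hpt.1 _ hw _ hs _ tau hc hfg).
  apply: (from_E hperf hh) => x.
  exact: (lift_id hid (hom_into_fst hh) he).
Qed.
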